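(* Let $k\geq 0$ and $n\geq k$ be integers, and let $G$ be a $k$-degenerate graph of order $n$. Then $\mu(G)<\mu(S_{n,k})$, unless $G=S_{n,k}$.
   Context: All graphs are finite and simple. A graph $G$ is $k$-degenerate if every subgraph of $G$ contains a vertex of degree at most $k$. $S_{n,k}$ denotes the join of a complete graph of order $k$ and an independent set of order $n-k$ (every vertex of the $K_k$ is adjacent to every other vertex). For a graph $H$, $\mu(H)$ denotes the largest eigenvalue of the adjacency matrix of $H$. *)

(* Defs.v *)
From mathcomp Require Import all_boot all_order all_algebra.
From mathcomp Require Import fingroup perm polyrcf.
Set Implicit Arguments. Unset Strict Implicit. Unset Printing Implicit Defensive.
Import Order.TTheory GRing.Theory Num.Theory.

Definition simple_graph (n : nat) (e : rel 'I_n) : Prop :=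
  symmetric e /\ irreflexive e.

(* k-degenerate: every (nonempty) subgraph -- vertex set A, edge relation
   f contained in e -- has a vertex of degree at most k. *)
Definition degenerate (k n : nat) (e : rel 'I_n) : Prop :=
  forall (A : {set 'I_n}) (f : rel 'I_n),
    A != set0 -> subrel f e ->
    exists2 v, v \in A & #|[set u in A | f v u]| <= k.

(* S_{n,k}: vertices 0..k-1 form a clique, joined to every other vertex;
   vertices k..n-1 form an independent set. *)
Definition S_graph (n k : nat) : rel 'I_n :=
  fun i j => (i != j) && ((i < k) || (j < k)).

Arguments S_graph : clear implicits.

Definition graph_iso (n : nat) (e1 e2 : rel 'I_n) : Prop :=
  exists s : {perm 'I_n}, forall x y, e1 x y = e2 (s x) (s y).

Local Open Scope ring_scope.

Definition adj_mx (R : nzRingType) (n : nat) (e : rel 'I_n) : 'M[R]_n :=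
  \matrix_(i, j) (e i j)%:R.

(* largest (real) eigenvalue: the largest root of the characteristic
   polynomial; rootsR lists the real roots in increasing order.
   (For a real symmetric matrix all eigenvalues are real.) *)
Definition mu (R : rcfType) (n : nat) (A : 'M[R]_n) : R :=
  last 0 (rootsR (char_poly A)).

(* Main.v *)
Require Import Defs.
From mathcomp Require Import all_boot all_order all_algebra.
From mathcomp Require Import fingroup perm polyrcf.
From mathcomp Require Import ring lra zify.
Import Order.TTheory GRing.Theory Num.Theory.
Local Open Scope ring_scope.
Set Implicit Arguments. Unset Strict Implicit. Unset Printing Implicit Defensive.
Section Alg.
Variable R : rcfType.
Lemma alg1 (K N mu t s b p q : R) : 0 <= K -> 0 <= N -> 0 <= t -> 0 <= mu ->
  mu * t = K * N -> t = mu - K + 1 -> s ^+ 2 <= K * p -> b ^+ 2 <= N * q ->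
  0 <= p -> 0 <= q -> 0 <= t * p + mu * q - 2 * b * s.
Proof.
move=> K0 N0 t0 mu0 hmt ht hs hb p0 q0.
have [Ke|Kp] := eqVneq K 0.
  have : s ^+ 2 <= 0 by rewrite Ke mul0r in hs.
  move=> hs'; have s0 : s = 0 by apply/eqP; rewrite -sqrf_eq0 eq_le hs' sqr_ge0.
  have := mulr_ge0 mu0 q0; have := mulr_ge0 t0 p0; rewrite s0; lra.
have Kpos : 0 < K by rewrite lt_def Kp K0.
have [te|tp] := eqVneq t 0.
  have N0' : N = 0.
    by move: hmt; rewrite te mulr0 => /esym/eqP; rewrite mulf_eq0 (negPf Kp) /= => /eqP.
  have : b ^+ 2 <= 0 by rewrite N0' mul0r in hb.
  move=> hb'; have b0 : b = 0 by apply/eqP; rewrite -sqrf_eq0 eq_le hb' sqr_ge0.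
  have := mulr_ge0 mu0 q0; rewrite b0 te; lra.
have tpos : 0 < t by rewrite lt_def tp t0.
have key : K * t * (t * p + mu * q - 2 * b * s) =
   t ^+ 2 * (K * p - s ^+ 2) + K ^+ 2 * (N * q - b ^+ 2) + (t * s - K * b) ^+ 2.
  have E : K * t * (t * p + mu * q - 2 * b * s) -
   (t ^+ 2 * (K * p - s ^+ 2) + K ^+ 2 * (N * q - b ^+ 2) + (t * s - K * b) ^+ 2)
   = K * q * (mu * t - K * N) by ring.
  by apply/eqP; rewrite -subr_eq0 E hmt subrr mulr0.
have : 0 <= K * t * (t * p + mu * q - 2 * b * s).
  rewrite key; apply: addr_ge0; last exact: sqr_ge0.
  apply: addr_ge0; apply: mulr_ge0; rewrite ?sqr_ge0 // subr_ge0 //.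
by rewrite pmulr_rge0 // mulr_gt0.
Qed.

Lemma alg2 (K N mu t s b p q : R) : 0 < K -> 0 < N -> 0 < t ->
  mu * t = K * N -> s ^+ 2 <= K * p -> b ^+ 2 <= N * q ->
  t * p + mu * q - 2 * b * s = 0 -> K * p = s ^+ 2 ->
  N * q = b ^+ 2 /\ t * s = K * b.
Proof.
move=> Kp Np tp hmt hs hb hX hKp.
have key : K * t * (t * p + mu * q - 2 * b * s) =
   t ^+ 2 * (K * p - s ^+ 2) + K ^+ 2 * (N * q - b ^+ 2) + (t * s - K * b) ^+ 2.
  have E : K * t * (t * p + mu * q - 2 * b * s) -
   (t ^+ 2 * (K * p - s ^+ 2) + K ^+ 2 * (N * q - b ^+ 2) + (t * s - K * b) ^+ 2)
   = K * q * (mu * t - K * N) by ring.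
  by apply/eqP; rewrite -subr_eq0 E hmt subrr mulr0.
move: key; rewrite hX hKp subrr !mulr0 add0r => /esym/eqP.
have h1 : 0 <= K ^+ 2 * (N * q - b ^+ 2) by rewrite mulr_ge0 ?sqr_ge0 // subr_ge0.
have h2 := sqr_ge0 (t * s - K * b).
rewrite paddr_eq0 // => /andP [/eqP e1 /eqP e2].
split.
  move: e1 => /eqP; rewrite mulf_eq0 sqrf_eq0 (gt_eqF Kp) /= subr_eq0 => /eqP //.
by move: e2 => /eqP; rewrite sqrf_eq0 subr_eq0 => /eqP.
Qed.
End Alg.
Section Alg2.
Variable R : rcfType.
Lemma algA (K N mt : R) : 0 < K -> 2 <= N -> mt <= K -> mt = K * N -> False.
Proof. move=> K0 N2 h1 h2; nra. Qed.
Lemma algB (K N mu t : R) : 0 < K -> K < mu -> 0 < t -> mu * t = K * N -> t < N.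
Proof. move=> K0 h1 t0 h2; nra. Qed.
End Alg2.
Section Main.
Variable R : rcfType.
Variable n : nat.
Implicit Types (z : 'I_n -> R) (K T N A B : {set 'I_n}) (r : rel 'I_n).

Definition Q r z := \sum_i \sum_j (r i j)%:R * (z i * z j).
Definition SK K : rel 'I_n := fun i j => (i != j) && ((i \in K) || (j \in K)).
Definition sK z K := \sum_(i in K) z i.
Definition pK z K := \sum_(i in K) z i ^+ 2.
Definition tot z := \sum_i z i.

Lemma sum_ind (F : 'I_n -> R) K : \sum_(i in K) F i = \sum_i (i \in K)%:R * F i.
Proof. rewrite big_mkcond; apply: eq_bigr => i _; case: (i \in K); by rewrite ?mul1r ?mul0r. Qed.

Lemma sum_delta (F : 'I_n -> R) v : \sum_j (j == v)%:R * F j = F v.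
Proof.
rewrite (bigD1 v) //= eqxx mul1r big1 ?addr0 // => j /negPf ->; by rewrite mul0r.
Qed.

Lemma Q_SK K z : Q (SK K) z = 2 * tot z * sK z K - sK z K ^+ 2 - pK z K.
Proof.
have E i j : (SK K i j)%:R = (i \in K)%:R + (j \in K)%:R
   - (i \in K)%:R * (j \in K)%:R - (j == i)%:R * (i \in K)%:R :> R.
  rewrite /SK eq_sym; case: eqP => [->|_]; case: (i \in K); case: (j \in K) => /=; rewrite ?mulr1n ?mulr0n; try ring.
have inner i : \sum_j (SK K i j)%:R * (z i * z j) =
  (i \in K)%:R * z i * tot z + z i * sK z K - (i \in K)%:R * z i * sK z K
   - (i \in K)%:R * z i ^+ 2.
  under eq_bigr => j _ do rewrite E.
  rewrite (_ : \sum_j _ = \sum_j (((i \in K)%:R * z i * z j + z i * ((j \in K)%:R * z j)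
      - (i \in K)%:R * z i * ((j \in K)%:R * z j))
      - (j == i)%:R * ((i \in K)%:R * z i * z j))); last first.
    by apply: eq_bigr => j _; ring.
  rewrite !sumrB big_split /= sum_delta -!mulr_sumr -!sum_ind /tot /sK; ring.
rewrite /Q; under eq_bigr => i _ do rewrite inner.
rewrite !sumrB big_split /= -!mulr_suml -!sum_ind /pK /sK /tot.
rewrite (sum_ind (fun i => z i ^+ 2)); ring.
Qed.

Lemma Q_split r z v : symmetric r -> irreflexive r ->
  Q r z = Q r (fun i => if i == v then 0 else z i)
     + 2 * z v * \sum_j (r v j)%:R * (if j == v then 0 else z j).
Proof.
move=> sym irr; set z' := fun i => if i == v then 0 else z i.
have Ez i : z i = z' i + (i == v)%:R * z v.
  by rewrite /z'; case: eqP => [->|_]; rewrite /= ?mulr1n ?mulr0n; ring.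
have inner i : \sum_j (r i j)%:R * (z i * z j) =
   \sum_j (r i j)%:R * (z' i * z' j) + (i == v)%:R * (z v * \sum_j (r i j)%:R * z' j)
   + z' i * z v * (r i v)%:R + (i == v)%:R * (z v * z v * (r i v)%:R).
  rewrite (_ : \sum_j _ = \sum_j ((r i j)%:R * (z' i * z' j) +
     (i == v)%:R * (z v * ((r i j)%:R * z' j)) +
     (j == v)%:R * (z' i * z v * (r i j)%:R) +
     (j == v)%:R * ((i == v)%:R * (z v * z v * (r i j)%:R)))); last first.
    apply: eq_bigr => j _; rewrite (Ez i) (Ez j).
    case: (j == v); case: (i == v); rewrite /= ?mulr1n ?mulr0n; ring.
  by rewrite !big_split /= !sum_delta -!mulr_sumr.
rewrite /Q; under eq_bigr => i _ do rewrite inner.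
rewrite !big_split /= !sum_delta irr /= ?mulr0n ?mulr0 ?addr0.
have -> : \sum_i z' i * z v * (r i v)%:R = z v * \sum_j (r v j)%:R * z' j.
  rewrite mulr_sumr; apply: eq_bigr => i _; rewrite sym; ring.
ring.
Qed.

Lemma SK_sym K : symmetric (SK K).
Proof. by move=> i j; rewrite /SK eq_sym orbC. Qed.
Lemma SK_irr K : irreflexive (SK K).
Proof. by move=> i; rewrite /SK eqxx. Qed.

Variable k : nat.
Hypothesis kn : (k <= n)%N.
Definition nonneg z := forall i, 0 <= z i.
Definition maxim z (T : {set 'I_n}) := #|T| = k /\ forall K : {set 'I_n}, #|K| = k -> sK z K <= sK z T.

Lemma ext N : (#|N| <= k)%N -> exists N', N \subset N' /\ #|N'| = k.
Proof.
move: {2}(k - #|N|)%N (erefl (k - #|N|)%N) => m; elim: m N => [|m IH] N hm hN.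
  by exists N; split => //; lia.
have : (0 < #|~: N|)%N.
  have := cardsC N; rewrite card_ord; lia.
case/card_gt0P => x; rewrite inE => xN.
have [N' [sN' cN']] : exists N', x |: N \subset N' /\ #|N'| = k.
  by apply: IH; rewrite cardsU1 xN; lia.
exists N'; split => //; apply: subset_trans sN'; exact: subsetUr.
Qed.

Lemma sK_ge0 z A : nonneg z -> 0 <= sK z A.
Proof. by move=> nz; apply: sumr_ge0 => i _. Qed.

Lemma sK_sub z A B : nonneg z -> A \subset B -> sK z A <= sK z B.
Proof.
move=> nz /subsetP sAB; rewrite /sK !(sum_ind z); apply: ler_sum => i _.
case iA: (i \in A); first by rewrite (sAB i iA).
by rewrite mul0r; case: (i \in B); rewrite ?mul1r ?mul0r.
Qed.

Lemma exists_max z : exists T, maxim z T.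
Proof.
have := ext (N := set0); rewrite cards0 => /(_ isT) [K0 [_ cK0]].
have PK0 : #|K0| == k by apply/eqP.
case: (@Order.TotalTheory.arg_maxP _ _ _ K0 (fun K => #|K| == k) (sK z) PK0) => T /eqP cT hT.
by exists T; split => // K cK; apply: hT; apply/eqP.
Qed.

Lemma sum_swap (F : 'I_n -> R) K a b : b \in K -> a \notin K ->
  \sum_(i in a |: (K :\ b)) F i = \sum_(i in K) F i - F b + F a.
Proof.
move=> bK aK; rewrite big_setU1 /=; last by rewrite inE negb_and aK orbT.
rewrite (big_setD1 b bK) /=; ring.
Qed.

Lemma card_swap K a b : b \in K -> a \notin K -> #|a |: (K :\ b)| = #|K|.
Proof.
move=> bK aK; rewrite cardsU1 inE negb_and aK orbT (cardsD1 b K) bK; lia.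
Qed.


Lemma P1' z T a b : maxim z T -> a \in T -> b \notin T -> z b <= z a.
Proof.
move=> [cT mT] aT bT; have := mT _ (etrans (card_swap aT bT) cT).
rewrite /sK sum_swap //; lra.
Qed.

Lemma P2 z T N : nonneg z -> maxim z T -> (#|N| <= k)%N -> sK z N <= sK z T.
Proof.
move=> nz [cT mT] cN; have [N' [sN' cN']] := ext cN.
exact: le_trans (sK_sub nz sN') (mT _ cN').
Qed.

Lemma tot_split z K : tot z = sK z K + sK z (~: K).
Proof.
rewrite /tot (bigID (fun i => i \in K)) /=; congr (_ + _).
by apply: eq_bigl => i; rewrite inE.
Qed.

Lemma exch z K a b : nonneg z -> b \in K -> a \notin K -> z b <= z a ->
  Q (SK K) z <= Q (SK (a |: (K :\ b))) z.
Proof.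
move=> nz bK aK hab; rewrite !Q_SK /sK /pK !sum_swap //.
have h2 : z a <= tot z - sK z K.
  rewrite (tot_split z K) addrC addKr /sK.
  have aC : a \in ~: K by rewrite inE.
  rewrite (big_setD1 a aC) /= lerDl; exact: sumr_ge0.
rewrite /sK in h2.
have h1' : 0 <= z a - z b by rewrite subr_ge0.
have h2' : 0 <= tot z - \sum_(i in K) z i - z a by rewrite subr_ge0.
have := mulr_ge0 h1' h2'.
set S := tot z; set s := \sum_(i in K) z i; set p := \sum_(i in K) z i ^+ 2.
nra.
Qed.

Lemma Lmax z T K : nonneg z -> maxim z T -> #|K| = k -> Q (SK K) z <= Q (SK T) z.
Proof.
move=> nz mT; have cT := proj1 mT; move: {2}#|K :\: T| (erefl #|K :\: T|) => m.
elim: m K => [|m IH] K hm cK.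
  have sKT : K \subset T by rewrite -setD_eq0 -cards_eq0 hm.
  have KT : K = T.
    by apply/eqP; rewrite eqEcard sKT cT cK /=.
  by rewrite KT.
have : (0 < #|K :\: T|)%N by lia.
case/card_gt0P => b; rewrite inE => /andP [bT bK].
have : (0 < #|T :\: K|)%N.
  have := cardsD T K; have := cardsD K T; rewrite setIC cT cK => h1 ->; by rewrite -h1 hm.
case/card_gt0P => a; rewrite inE => /andP [aK aT].
apply: le_trans (exch nz bK aK (P1' mT aT bT)) _.
apply: IH; last by rewrite card_swap.
have E : (a |: (K :\ b)) :\: T = (K :\: T) :\ b.
  apply/setP => x; rewrite !inE; case: (eqVneq x a) => [->|_] /=.
    by rewrite aT (negPf aK) !andbF.
  by case: (x != b); case: (x \in K); case: (x \in T).
move: hm; rewrite E (cardsD1 b (K :\: T)) inE bT bK /=; lia.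
Qed.

Lemma Q0 r z : (forall i, z i = 0) -> Q r z = 0.
Proof. by move=> z0; rewrite /Q big1 // => i _; rewrite big1 // => j _; rewrite z0 mul0r mulr0. Qed.

Variable e : rel 'I_n.
Hypothesis esym : symmetric e.
Hypothesis eirr : irreflexive e.
Hypothesis edeg : degenerate k e.

Lemma part1 z T : nonneg z -> maxim z T -> Q e z <= Q (SK T) z.
Proof.
move: {2}#|[set i | z i != 0]| (leqnn #|[set i | z i != 0]|) => m.
elim: m z T => [|m IH] z T hm nz mT.
  have z0 i : z i = 0.
    apply/eqP; apply: contraT => zi; move: hm; rewrite leqn0 cards_eq0 => /eqP/setP/(_ i).
    by rewrite !inE zi.
  by rewrite !Q0.
set A := [set i | z i != 0] in hm.
have [A0|An0] := eqVneq A set0.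
  have z0 i : z i = 0.
    by apply/eqP; apply: contraT => zi; move/setP/(_ i): A0; rewrite !inE zi.
  by rewrite !Q0.
have [v vA dv] := edeg (f := e) An0 (fun _ _ h => h).
set z' := fun i => if i == v then 0 else z i.
have nz' : nonneg z' by move=> i; rewrite /z'; case: eqP.
have [T' mT'] := exists_max z'.
have hm' : (#|[set i | z' i != 0%R]| <= m)%N.
  have -> : [set i | z' i != 0] = A :\ v.
    apply/setP => i; rewrite !inE /z'; case: (eqVneq i v) => [->|] /=; by rewrite ?eqxx.
  by move: hm; rewrite (cardsD1 v A) vA.
have IH' := IH z' T' hm' nz' mT'.
rewrite (Q_split z v esym eirr).
apply: le_trans (Lmax nz mT (proj1 mT')).
rewrite (Q_split z v (@SK_sym T') (@SK_irr T')).
apply: lerD => //.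
have zv0 : 0 <= 2 * z v by apply: mulr_ge0 => //.
apply: ler_wpM2l => //.
set N := [set u in A | e v u].
apply: (@le_trans _ _ (sK z' N)).
  rewrite /sK sum_ind; apply: ler_sum => j _.
  rewrite /N inE; case evj: (e v j); rewrite ?andbT ?andbF ?mul0r //=.
  case jA: (j \in A) => //; rewrite ?mul1r ?mul0r //.
  move: jA; rewrite /A inE => /negbFE/eqP zj.
  by rewrite /z' zj; case: eqP.
apply: (le_trans (P2 nz' mT' dv)).
rewrite /sK sum_ind; apply: ler_sum => j _.
rewrite /SK /z'; case: (eqVneq j v) => [->|jv]; first by rewrite !mulr0.
rewrite /=; case: (j \in T'); rewrite ?orbT //= mul0r.
by apply: mulr_ge0 => //; case: (_ || _).
Qed.

Definition dd : R := k%:R - 1.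
Definition cc : R := k%:R * (n - k)%:R.
Definition rr : R := Num.sqrt (dd ^+ 2 + 4 * cc).
Definition mu0 : R := (dd + rr) / 2.
Definition tt : R := mu0 - dd.

Lemma cc_ge0 : 0 <= cc.
Proof. by rewrite /cc mulr_ge0 ?ler0n. Qed.

Lemma rr_sq : rr ^+ 2 = dd ^+ 2 + 4 * cc.
Proof. rewrite /rr sqr_sqrtr //; apply: addr_ge0; rewrite ?sqr_ge0 // mulr_ge0 ?cc_ge0 //. Qed.

Lemma rr_ge : `|dd| <= rr.
Proof.
rewrite -sqrtr_sqr /rr; apply: ler_wsqrtr; rewrite lerDl mulr_ge0 ?cc_ge0 //.
Qed.

Lemma tt_ge0 : 0 <= tt.
Proof. have := rr_ge; have := ler_norm dd; rewrite /tt /mu0; lra. Qed.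

Lemma mu0_ge0 : 0 <= mu0.
Proof. have := rr_ge; have := ler_normr dd dd; rewrite lexx /= => _.
have := ler_norm (- dd); rewrite normrN /mu0; lra. Qed.

Lemma mu0_tt : mu0 * tt = cc.
Proof.
rewrite /tt /mu0; have h := rr_sq.
have E : (dd + rr) / 2 * ((dd + rr) / 2 - dd) = (rr ^+ 2 - dd ^+ 2) / 4 by field.
by rewrite E h; field.
Qed.

Lemma tt_def : tt = mu0 - k%:R + 1.
Proof. rewrite /tt /dd; ring. Qed.

Lemma mu0_eq : mu0 ^+ 2 = (k%:R - 1) * mu0 + k%:R * (n - k)%:R.
Proof. have := mu0_tt; rewrite /tt /dd /cc => <-; ring. Qed.

Lemma CS_id x A : \sum_(i in A) \sum_(j in A) (x i - x j) ^+ 2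
   = 2 * (#|A|%:R * pK x A - sK x A ^+ 2).
Proof.
rewrite (_ : \sum_(i in A) _ = \sum_(i in A) (#|A|%:R * x i ^+ 2 + pK x A
     - 2 * (x i * sK x A))); last first.
  apply: eq_bigr => i _; rewrite /pK /sK.
  rewrite (_ : \sum_(j in A) _ = \sum_(j in A) (x i ^+ 2 + x j ^+ 2 - 2 * (x i * x j))); last first.
    by apply: eq_bigr => j _; ring.
  rewrite !sumrB big_split /= sumr_const -mulr_sumr -mulr_sumr.
  ring.
rewrite !sumrB big_split /= sumr_const -!mulr_sumr -mulr_suml -/(sK x A) -/(pK x A).
ring.
Qed.

Lemma CS x A : sK x A ^+ 2 <= #|A|%:R * pK x A.
Proof.
have : 0 <= \sum_(i in A) \sum_(j in A) (x i - x j) ^+ 2.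
  by apply: sumr_ge0 => i _; apply: sumr_ge0 => j _; exact: sqr_ge0.
rewrite CS_id pmulr_rge0 // subr_ge0 //.
Qed.

Lemma card_compl T : #|T| = k -> #|~: T| = (n - k)%N.
Proof. move=> cT; have := cardsC T; rewrite card_ord cT; lia. Qed.

Lemma pK_ge0 x A : 0 <= pK x A.
Proof. by apply: sumr_ge0 => i _; exact: sqr_ge0. Qed.

Lemma Sbound_X x T : #|T| = k ->
  0 <= tt * pK x T + mu0 * pK x (~: T) - 2 * sK x (~: T) * sK x T.
Proof.
move=> cT; apply: (@alg1 _ k%:R (n - k)%:R) => //; rewrite ?tt_ge0 ?mu0_ge0 ?pK_ge0 //.
- exact: mu0_tt.
- exact: tt_def.
- by have := CS x T; rewrite cT.
- by have := CS x (~: T); rewrite card_compl.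
Qed.

Lemma Sslack x T : mu0 * (pK x T + pK x (~: T)) - Q (SK T) x =
  (k%:R * pK x T - sK x T ^+ 2) +
  (tt * pK x T + mu0 * pK x (~: T) - 2 * sK x (~: T) * sK x T).
Proof. rewrite Q_SK (tot_split x T) tt_def; ring. Qed.

Lemma Sbound x T : #|T| = k -> Q (SK T) x <= mu0 * (pK x T + pK x (~: T)).
Proof.
move=> cT; rewrite -subr_ge0 Sslack; apply: addr_ge0; last exact: Sbound_X.
by rewrite subr_ge0 -cT CS.
Qed.

Lemma const_of_CS x A : #|A|%:R * pK x A = sK x A ^+ 2 ->
  forall i j, i \in A -> j \in A -> x i = x j.
Proof.
move=> h; have := CS_id x A; rewrite h subrr mulr0 => H i j iA jA.
have H1 := psumr_eq0P (fun i _ => sumr_ge0 _ (fun j _ => sqr_ge0 (x i - x j))) H iA.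
have := psumr_eq0P (fun j _ => sqr_ge0 (x i - x j)) H1 jA.
by move/eqP; rewrite sqrf_eq0 subr_eq0 => /eqP.
Qed.

Lemma sK_const x A c : (forall i, i \in A -> x i = c) -> sK x A = #|A|%:R * c.
Proof.
move=> h; rewrite /sK (eq_bigr (fun _ => c)) ?sumr_const ?mulr_natl //.
Qed.

Lemma sum_ge_term (F : 'I_n -> R) i : (forall j, 0 <= F j) -> F i <= \sum_j F j.
Proof.
move=> h; rewrite (bigD1 i) //= lerDl; apply: sumr_ge0 => j _; exact: h.
Qed.

Lemma Qdiff r1 r2 z : Q r2 z - Q r1 z =
  \sum_u \sum_v ((r2 u v)%:R - (r1 u v)%:R) * (z u * z v).
Proof.
rewrite /Q -sumrB; apply: eq_bigr => u _; rewrite -sumrB; apply: eq_bigr => v _.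
by rewrite mulrBl.
Qed.

Lemma part3 x : (1 <= k)%N -> (exists i, x i != 0) ->
  mu0 * \sum_i x i ^+ 2 <= Q e x ->
  exists T : {set 'I_n}, #|T| = k /\ (forall u v, e u v = SK T u v).
Proof.
move=> k1 [i1 xi1] hQ.
set y := fun i => `|x i|.
have ny : nonneg y by move=> i; exact: normr_ge0.
have [T mT] := exists_max y; have cT := proj1 mT.
exists T; split => //.
have Qxy : Q e x <= Q e y.
  apply: ler_sum => i _; apply: ler_sum => j _; apply: ler_wpM2l => //.
  by rewrite /y -normrM ler_norm.
have sq : \sum_i x i ^+ 2 = pK y T + pK y (~: T).
  have := tot_split (fun i => y i ^+ 2) T; rewrite /tot /sK /pK => <-.
  by apply: eq_bigr => i _; rewrite /y real_normK // num_real.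
have h1 := part1 ny mT.
have h2 := Sbound y cT.
rewrite sq in hQ.
have E1 : Q e y = Q (SK T) y by apply/le_anti; rewrite h1 /=; lra.
have E2 : mu0 * (pK y T + pK y (~: T)) - Q (SK T) y = 0.
  by apply/eqP; rewrite subr_eq0 eq_le h2 /=; lra.
have HX := Sbound_X y cT.
have HC : 0 <= k%:R * pK y T - sK y T ^+ 2 by rewrite subr_ge0 -cT CS.
move: E2; rewrite Sslack => /eqP; rewrite paddr_eq0 // => /andP [/eqP hkp /eqP hX].
move: hkp => /eqP; rewrite subr_eq0 => /eqP hkp.
have cstT := const_of_CS (etrans (congr1 (fun m => m%:R * _) cT) hkp).
have : (0 < #|T|)%N by rewrite cT.
case/card_gt0P => i0 i0T.
set a := y i0.
have yT u : u \in T -> y u = a by move=> uT; exact: cstT.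
have ynz : y i1 != 0 by rewrite /y normr_eq0.
have [c0 [a0 c00 c0a yC alt]] : exists c0, [/\ 0 < a, 0 < c0, c0 <= a,
    (forall u, u \notin T -> y u = c0) &
    (c0 < a \/ (forall u v, u \notin T -> v \notin T -> u = v))].
  have [kltn|kgen] := ltnP k n.
    have cc0 : 0 < cc by rewrite /cc mulr_gt0 // ltr0n; clear -k1 kltn; lia.
    have tt0 : 0 < tt.
      rewrite lt_def tt_ge0 andbT; apply/eqP => t0.
      by move: cc0; rewrite -mu0_tt t0 mulr0 ltxx.
    have cC := card_compl cT.
    have [hq hts] : (n - k)%:R * pK y (~: T) = sK y (~: T) ^+ 2 /\
        tt * sK y T = k%:R * sK y (~: T).
      apply: (@alg2 _ k%:R (n - k)%:R mu0 tt _ _ (pK y T) (pK y (~: T))) => //.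
      - by rewrite ltr0n.
      - by rewrite ltr0n subn_gt0.
      - exact: mu0_tt.
      - by rewrite -cT CS.
      - by rewrite -cC CS.
    have cstC := const_of_CS (etrans (congr1 (fun m => m%:R * _) cC) hq).
    have : (0 < #|~: T|)%N by rewrite cC subn_gt0.
    case/card_gt0P => j0 j0C.
    set c0 := y j0.
    have yC u : u \notin T -> y u = c0.
      by move=> uT; apply: cstC; rewrite // inE.
    have j0T : j0 \notin T by rewrite inE in j0C.
    have c0a : c0 <= a by exact: P1' mT i0T j0T.
    have sTe : sK y T = k%:R * a by rewrite (sK_const yT) cT.
    have sCe : sK y (~: T) = (n - k)%:R * c0.
      by rewrite (sK_const (c := c0)) ?cC // => u; rewrite inE; exact: yC.
    have hta : tt * a = (n - k)%:R * c0.
      move: hts; rewrite sTe sCe => h.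
      have kn0 : k%:R != 0 :> R by rewrite pnatr_eq0 -lt0n.
      apply: (mulfI kn0); by rewrite mulrCA h.
    have nk0 : 0 < (n - k)%:R :> R by rewrite ltr0n subn_gt0.
    have [a0 c00] : 0 < a /\ 0 < c0.
      case: (boolP (i1 \in T)) => i1T.
        have a0 : 0 < a by rewrite lt_def -(yT _ i1T) ynz ny.
        split => //; have : 0 < tt * a by exact: mulr_gt0.
        rewrite hta pmulr_rgt0 //.
      have c00 : 0 < c0 by rewrite lt_def -(yC _ i1T) ynz ny.
      by split => //; exact: lt_le_trans c0a.
    exists c0; split => //.
    have [k2|k2] := ltnP k.+1 n.
      left.
      have muk : k%:R < mu0.
        rewrite ltNge; apply/negP => hle.
        have h3 : mu0 * tt <= k%:R.
          have tle : tt <= 1 by rewrite tt_def; lra.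
          have := ler_wpM2l mu0_ge0 tle; rewrite mulr1 => h4; exact: le_trans h4 hle.
        move: h3; rewrite mu0_tt /cc.
        have : (2 <= n - k)%N by clear -k2; lia.
        rewrite -(ler_nat R) => h5 h6.
        have k0 : 0 < k%:R :> R by rewrite ltr0n.
        exact: (algA k0 h5 h6).
      have ttl : tt < (n - k)%:R.
        have k0 : 0 < k%:R :> R by rewrite ltr0n.
        have := mu0_tt; rewrite /cc => h; exact: (algB k0 muk tt0 h).
      have : (n - k)%:R * c0 < (n - k)%:R * a.
        rewrite -hta; rewrite ltr_pM2r //.
      by rewrite ltr_pM2l.
    right => u v uT vT.
    have : (#|~: T| <= 1)%N by rewrite cC; clear -k2 kltn; lia.
    move/card_le1_eqP => H; symmetry; apply: (H u v); by rewrite inE.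
  have kn' : k = n by apply/eqP; rewrite eqn_leq kn kgen.
  have C0 : ~: T = set0 by apply: cards0_eq; rewrite card_compl // kn' subnn.
  have allT u : u \in T by apply/negPn; rewrite -in_setC C0 inE.
  have a0 : 0 < a by rewrite lt_def -(yT _ (allT i1)) ynz ny.
  exists a; split; [done|done|exact: lexx| |].
    by move=> u; rewrite allT.
  by right => u v; rewrite allT.
have ylo u : c0 <= y u.
  by case: (boolP (u \in T)) => uT; [rewrite yT | rewrite yC].
have ypos u : 0 < y u by exact: lt_le_trans (ylo u).
set ones := fun _ : 'I_n => 1 : R.
have mones : maxim ones T.
  split => // K cK; rewrite /sK !sumr_const cK cT //.
have HD := part1 (fun _ => ler01) mones.
move: HD; rewrite -subr_ge0 Qdiff => HD0.
have HD : 0 <= \sum_u \sum_v ((SK T u v)%:R - (e u v)%:R :> R).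
  apply: le_trans HD0 _; apply: ler_sum => u _; apply: ler_sum => v _.
  by rewrite /ones mulr1 mulr1.
have HDw : \sum_u \sum_v ((SK T u v)%:R - (e u v)%:R) * (y u * y v) = 0.
  by rewrite -Qdiff E1 subrr.
have nobad u v : e u v -> SK T u v.
  move=> euv; apply: contraT => nS.
  have uv : u != v by apply: contraTneq euv => ->; rewrite eirr.
  move: nS; rewrite /SK uv /= negb_or => /andP [uT vT].
  have c0a' : c0 < a.
    case: alt => // H; by move: uv; rewrite (H u v uT vT) eqxx.
  set F := fun u v => ((SK T u v)%:R - (e u v)%:R) * (y u * y v)
     - a * c0 * ((SK T u v)%:R - (e u v)%:R).
  have Fge u' v' : 0 <= F u' v'.
    rewrite /F; case: (boolP (SK T u' v')) => S1; case: (boolP (e u' v')) => E;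
      rewrite /= ?subrr ?mul0r ?mulr0 ?subrr //.
    - rewrite subr0 !mul1r mulr1 subr_ge0.
      move: S1; rewrite /SK => /andP [_ /orP [uT'|vT']].
        rewrite (yT _ uT') ler_pM2l //; exact: ylo.
      by rewrite (yT _ vT') [X in _ <= X]mulrC ler_pM2l //; exact: ylo.
    - have : ~~ SK T u' v' by [].
      have uv' : u' != v' by apply: contraTneq E => ->; rewrite eirr.
      rewrite /SK uv' /= negb_or => /andP [uT' vT'].
      rewrite (yC _ uT') (yC _ vT').
      rewrite (_ : (0 - 1) * (c0 * c0) - a * c0 * (0 - 1) = c0 * (a - c0)); last by ring.
      by apply: mulr_ge0; [exact: ltW | rewrite subr_ge0].
  have Fuv : 0 < F u v.
    rewrite /F /SK uv /= (negPf uT) (negPf vT) euv /= (yC _ uT) (yC _ vT).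
    rewrite (_ : (0 - 1) * (c0 * c0) - a * c0 * (0 - 1) = c0 * (a - c0)); last by ring.
    by apply: mulr_gt0; rewrite // subr_gt0.
  have : \sum_u' \sum_v' F u' v' = - (a * c0) * \sum_u' \sum_v' ((SK T u' v')%:R - (e u' v')%:R).
    rewrite /F; under eq_bigr => u' _ do rewrite sumrB.
    rewrite sumrB HDw add0r mulr_sumr -sumrN; apply: eq_bigr => u' _.
    rewrite mulr_sumr -sumrN; apply: eq_bigr => v' _; ring.
  have : 0 < \sum_u' \sum_v' F u' v'.
    apply: lt_le_trans Fuv _; apply: le_trans (sum_ge_term _ (fun u' => sumr_ge0 _ (fun v' _ => Fge u' v'))).
    exact: sum_ge_term.
  move=> h3 h4; move: h3; rewrite h4 mulNr oppr_gt0 => h5.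
  have : 0 <= a * c0 * \sum_u' \sum_v' ((SK T u' v')%:R - (e u' v')%:R).
    have ac0 : 0 <= a * c0 by rewrite mulr_ge0 // ltW.
    exact: mulr_ge0 ac0 HD.
  by rewrite leNgt h5.
move=> u v.
have Dge u' v' : 0 <= ((SK T u' v')%:R - (e u' v')%:R) * (y u' * y v').
  apply: mulr_ge0; last by apply: mulr_ge0; apply: ltW.
  case: (boolP (e u' v')) => E; first by rewrite (nobad _ _ E) subrr.
  by rewrite subr0.
have H1 : \sum_v' ((SK T u v')%:R - (e u v')%:R) * (y u * y v') = 0.
  apply: (psumr_eq0P _ HDw) => // u' _; apply: sumr_ge0 => v' _; exact: Dge.
have : ((SK T u v)%:R - (e u v)%:R) * (y u * y v) = 0.
  apply: (psumr_eq0P _ H1) => // v' _; exact: Dge.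
move/eqP; rewrite mulf_eq0 mulf_eq0 !(gt_eqF (ypos _)) !orbF subr_eq0 => /eqP.
by case: (SK T u v); case: (e u v) => //= /eqP; rewrite ?oner_eq0 // eq_sym oner_eq0.
Qed.

Lemma k0_empty : k = 0%N -> forall u v, e u v = false.
Proof.
move=> k0 u v; apply: negbTE; apply/negP => euv.
have An0 : [set u; v] != set0 by apply/set0Pn; exists u; rewrite !inE eqxx.
have [w] := edeg An0 (fun _ _ h => h).
rewrite k0 leqn0 cards_eq0 => wA /eqP /setP H.
move: H; case/set2P: wA => -> H.
  by move: (H v); rewrite !inE eqxx orbT euv.
by move: (H u); rewrite !inE eqxx /= esym euv.
Qed.

Lemma iso_SK T : #|T| = k -> (forall u v, e u v = SK T u v) -> graph_iso e (S_graph n k).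
Proof.
move=> cT hT.
have [n0|n0] := posnP n.
  exists 1%g => u; have := ltn_ord u; rewrite {2}n0.
  done.
pose u0 : 'I_n := Ordinal n0.
pose g (u : 'I_n) : nat := if u \in T then index u (enum T) else (k + index u (enum (~: T)))%N.
have gn u : (g u < n)%N.
  rewrite /g; case: ifP => uT.
    have : (index u (enum T) < size (enum T))%N by rewrite index_mem mem_enum.
    rewrite -cardE cT; lia.
  have : (index u (enum (~: T)) < size (enum (~: T)))%N by rewrite index_mem mem_enum inE uT.
  rewrite -cardE card_compl //; lia.
have gk u : (g u < k)%N = (u \in T).
  rewrite /g; case: ifP => uT; last by lia.
  have : (index u (enum T) < size (enum T))%N by rewrite index_mem mem_enum.
  by rewrite -cardE cT.
pose f (u : 'I_n) : 'I_n := insubd u0 (g u).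
have fv u : val (f u) = g u by rewrite val_insubd gn.
have finj : injective f.
  move=> u v /(congr1 val); rewrite !fv => guv.
  have uvT : (u \in T) = (v \in T) by rewrite -gk -gk guv.
  case: (boolP (v \in T)) => vT; have := vT; rewrite -uvT => uT.
    move: guv; rewrite /g uT vT => /(congr1 (nth u0 (enum T))).
    by rewrite !nth_index ?mem_enum.
  move: guv; rewrite /g (negPf uT) (negPf vT) => /addnI /(congr1 (nth u0 (enum (~: T)))).
  by rewrite !nth_index ?mem_enum ?inE.
exists (perm finj) => x y; rewrite hT /SK /S_graph !permE (inj_eq finj).
by rewrite /= !fv !gk.
Qed.

Lemma mu0_pos : (1 <= k)%N -> (2 <= n)%N -> 0 < mu0.
Proof.
move=> k1 n2; have [kltn|kgen] := ltnP k n.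
  have cc0 : 0 < cc by rewrite /cc mulr_gt0 // ltr0n; lia.
  rewrite lt_def mu0_ge0 andbT; apply/eqP => m0.
  by move: cc0; rewrite -mu0_tt m0 mul0r ltxx.
have : 1 <= dd.
  rewrite /dd lerBrDr (_ : 1 + 1 = 2%:R) // ler_nat; lia.
have := tt_ge0; rewrite /tt => h1 h2; lra.
Qed.

Lemma le_last (s : seq R) x x0 : sorted <%R s -> x \in s -> x <= last x0 s.
Proof.
elim: s x0 => [|a s IH] x0 //= hs; rewrite inE => /orP [/eqP ->|xs].
  have := mem_last a s; rewrite inE => /orP [/eqP ->//|ls].
  have := order_path_min (@lt_trans _ _) hs => /allP /(_ _ ls) /ltW //.
exact: (IH a (path_sorted hs) xs).
Qed.

Lemma muG : (1 <= k)%N -> (2 <= n)%N -> ~ graph_iso e (S_graph n k) ->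
  mu (adj_mx R e) < mu0.
Proof.
move=> k1 n2 niso; rewrite /mu; set p := char_poly _.
have pn0 : p != 0 := monic_neq0 (char_poly_monic _).
have := mem_last 0 (rootsR p); rewrite inE => /orP [/eqP -> | hin]; first exact: mu0_pos.
set lam := last 0 (rootsR p) in hin *.
have rt : root p lam.
  by have := roots_on_rootsR pn0 lam; rewrite hin => /andP [].
move: rt; rewrite -eigenvalue_root_char => /eigenvalueP [v vA vn0].
pose x := fun i => v 0 i.
have Ej j : \sum_i (e i j)%:R * x i = lam * x j.
  have := congr1 (fun M : 'M[R]_(1, n) => M 0 j) vA; rewrite !mxE => <-.
  by apply: eq_bigr => i _; rewrite !mxE mulrC.
have Qx : Q e x = lam * \sum_i x i ^+ 2.
  rewrite /Q exchange_big /= mulr_sumr; apply: eq_bigr => j _.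
  rewrite (_ : \sum_i _ = (\sum_i (e i j)%:R * x i) * x j); last first.
    by rewrite mulr_suml; apply: eq_bigr => i _; ring.
  rewrite Ej; ring.
have xn0 : exists i, x i != 0.
  apply/existsP; apply: contraR vn0; rewrite negb_exists => /forallP H.
  apply/eqP/rowP => j; rewrite !mxE; apply/eqP; move: (H j); by rewrite negbK.
rewrite ltNge; apply/negP => hle.
have s0 : 0 <= \sum_i x i ^+ 2 by apply: sumr_ge0 => i _; exact: sqr_ge0.
have := part3 k1 xn0; rewrite Qx => /(_ (ler_wpM2r s0 hle)) [T [cT hT]].
exact: niso (iso_SK cT hT).
Qed.

Lemma count_sum (c d : R) : \sum_(i < n) (if (i < k)%N then c else d) = k%:R * c + (n - k)%:R * d.
Proof.
rewrite -(big_mkord xpredT (fun i => if (i < k)%N then c else d)).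
rewrite (big_cat_nat (leq0n k) kn) /=.
rewrite (eq_big_nat _ _ (F2 := fun _ => c)); last by move=> i /andP [_ ->].
rewrite [X in _ + X](eq_big_nat _ _ (F2 := fun _ => d)); last first.
  by move=> i /andP [ki _]; rewrite ltnNge ki.
by rewrite !sumr_const_nat subn0 !mulr_natl.
Qed.

Lemma muS : (1 <= k)%N -> (2 <= n)%N -> mu0 <= mu (adj_mx R (S_graph n k)).
Proof.
move=> k1 n2; rewrite /mu; set p := char_poly _.
have pn0 : p != 0 := monic_neq0 (char_poly_monic _).
have n0 : (0 < n)%N by lia.
pose w (i : 'I_n) : R := if (i < k)%N then mu0 else k%:R.
pose v := \row_i w i.
have vA : v *m adj_mx R (S_graph n k) = mu0 *: v.
  apply/rowP => j; rewrite !mxE.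
  under eq_bigr => i _ do rewrite !mxE.
  case: (boolP (j < k)%N) => jk.
    have E i : (S_graph n k i j)%:R = (i != j)%:R :> R.
      by rewrite /S_graph jk orbT andbT.
    under eq_bigr => i _ do rewrite E.
    have tot : \sum_i w i = k%:R * mu0 + (n - k)%:R * k%:R := count_sum mu0 k%:R.
    rewrite (bigD1 j) //= in tot.
    rewrite (bigD1 j) //= eqxx mulr0 add0r.
    rewrite (eq_bigr (fun i => w i)); last by move=> i ij; rewrite ij mulr1.
    rewrite (_ : \sum_(i < n | i != j) w i = k%:R * mu0 + (n - k)%:R * k%:R - w j); last first.
      by rewrite -tot; ring.
    rewrite /w jk; have := mu0_eq; rewrite natrB //; move=> h2.
    by rewrite -[mu0 * mu0]expr2 h2; ring.
  have E i : w i * (S_graph n k i j)%:R = if (i < k)%N then mu0 else 0.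
    rewrite /S_graph /w (negPf jk) /= orbF; case: (boolP (i < k)%N) => ik //=.
      have -> : i != j by apply/eqP => ij; move: jk; rewrite -ij ik.
      by rewrite mulr1.
    by rewrite andbF mulr0.
  under eq_bigr => i _ do rewrite E.
  by rewrite count_sum mulr0 addr0 /w (negPf jk) /= mulrC.
have vn0 : v != 0.
  apply: (contraTneq _ (mu0_pos k1 n2)) => v0.
  have := congr1 (fun M : 'M[R]_(1, n) => M 0 (Ordinal n0)) v0.
  by rewrite !mxE /w /= k1 => ->; rewrite ltxx.
have : eigenvalue (adj_mx R (S_graph n k)) mu0 by apply/eigenvalueP; exists v.
rewrite eigenvalue_root_char -/p => rt.
have hin : mu0 \in rootsR p by rewrite -(roots_on_rootsR pn0 mu0) rt.
apply: le_last hin; rewrite /rootsR; exact: sorted_roots.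
Qed.
End Main.

Unset Implicit Arguments.

Theorem theorem1 (R : rcfType) (k n : nat) (e : rel 'I_n) :
  (k <= n)%N -> simple_graph e -> degenerate k e ->
  ~ graph_iso e (S_graph n k) ->
  mu (adj_mx R e) < mu (adj_mx R (S_graph n k)).
Proof.
move=> kn [esym eirr] edeg niso.
have [k0|k1] := posnP k.
  exfalso; apply: niso; exists 1%g => u v.
  by rewrite (k0_empty esym edeg k0) !perm1 /S_graph k0 /= andbF.
have [n1|n2] := leqP n 1.
  exfalso; apply: niso; exists 1%g => u v.
  have uv : u = v.
    apply: ord_inj; have := ltn_ord u; have := ltn_ord v; move: n1; clear; lia.
  by rewrite uv eirr !perm1 /S_graph eqxx.
exact: lt_le_trans (muG R kn esym eirr edeg k1 n2 niso) (muS R kn k1 n2).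
Qed.
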